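(* Let $\widehat z_2(s,t)$ be a complex-valued function of class $\mathcal{C}^7$ on $[0,\epsilon]\times I$, where $I$ is a neighborhood of $[0,2\pi]$, such that $\widehat z_2(s,t)=e^{it}-\tfrac43 a s^4e^{3it}+O(s^5)$ with $a\in\mathbb{R}$, $\operatorname{Im}\widehat z_2(s,0)=0$ for all $s\in[0,\epsilon]$, and for each $s\in(0,\epsilon]$ the map $t\mapsto\widehat z_2(s,t)$ is periodic with period $T_s$ and parametrizes a simple closed curve on $[0,T_s]$ (with $T_0=2\pi$). Then, after possibly shrinking $\epsilon$, the function $[0,\epsilon]\ni s\mapsto T_s\in\mathbb{R}$ is of class $\mathcal{C}^7$ and $T_s=2\pi+O(s^5)$.
   Context: In the paper, $\widehat z_2(s,t)=z_2(s,t)/s$, where $z_2(s,t)$ is the $z_2$-component of the family of chains (solutions of the Fefferman Hamiltonian system) of the hypersurface $M$ with the specified initial conditions; the expansion hypothesis corresponds to $z_2(s,t)=se^{it}-\tfrac43 a s^5e^{3it}+O(s^6)$. *)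

(* Defs.v *)
From Stdlib Require Import Reals.
From Coquelicot Require Import Coquelicot.
Open Scope R_scope.

Definition cis (t : R) : C := (cos t, sin t).

Fixpoint C2k (k : nat) (U : R * R -> Prop) (f : R -> R -> R) : Prop :=
  (forall p, U p -> continuous (fun q : R * R => f (fst q) (snd q)) p) /\
  match k with
  | O => True
  | S k' =>
      (forall p, U p -> ex_derive (fun x => f x (snd p)) (fst p)
                     /\ ex_derive (fun y => f (fst p) y) (snd p)) /\
      C2k k' U (fun x y => Derive (fun x' => f x' y) x) /\
      C2k k' U (fun x y => Derive (fun y' => f x y') y)
  end.

Fixpoint C1k (k : nat) (U : R -> Prop) (f : R -> R) : Prop :=
  (forall x, U x -> continuous f x) /\
  match k with
  | O => True
  | S k' => (forall x, U x -> ex_derive f x) /\ C1k k' U (Derive f)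
  end.

Definition C2k_on_complex (k : nat) (S : R * R -> Prop) (z : R -> R -> C) : Prop :=
  exists U : R * R -> Prop, open U /\ (forall p, S p -> U p) /\
    C2k k U (fun s t => Re (z s t)) /\ C2k k U (fun s t => Im (z s t)).

Definition C1k_on_interval (k : nat) (a b : R) (f : R -> R) : Prop :=
  exists (V : R -> Prop) (g : R -> R), open V /\
    (forall x, a <= x <= b -> V x) /\ C1k k V g /\
    (forall x, a <= x <= b -> g x = f x).

(* Main.v *)
Require Import Defs.
From Stdlib Require Import Reals Lra Lia ZArith ClassicalEpsilon Classical Ranalysis5.
From Coquelicot Require Import Coquelicot.
Open Scope R_scope.

Lemma PI_gt3 : 3 < PI. Proof. pose proof PI2_3_2; lra. Qed.
Lemma sin_lb3 x : 0 <= x <= 2 -> x - x^3/6 <= sin x.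
Proof. intros H. assert (HP : x <= PI) by (pose proof PI_gt3; lra).
destruct (SIN x (proj1 H) HP) as [H1 _].
assert (E : sin_lb x = x - x^3/6 + x^5/120 - x^7/5040).
{ unfold sin_lb, sin_approx, sin_term. simpl. field. }
rewrite E in H1.
assert (0 <= x^5/120 - x^7/5040).
{ assert (x^2 <= 4) by nra. assert (0 <= x^5) by (apply pow_le; lra).
  replace (x^7) with (x^5 * x^2) by ring.
  assert (x^5 * x^2 <= x^5 * 4) by (apply Rmult_le_compat_l; lra). lra. }
lra. Qed.
Lemma cos_lb2 x : -1 <= x <= 1 -> 1 - x^2/2 <= cos x.
Proof. intros H. assert (HP : - PI/2 <= x <= PI/2) by (pose proof PI_gt3; lra).
destruct (COS x (proj1 HP) (proj2 HP)) as [H1 _].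
assert (E : cos_lb x = 1 - x^2/2 + x^4/24 - x^6/720).
{ unfold cos_lb, cos_approx, cos_term. simpl. field. }
rewrite E in H1.
assert (0 <= x^4/24 - x^6/720).
{ assert (x^2 <= 1) by nra. assert (0 <= x^4) by (replace (x^4) with ((x^2)^2) by ring; apply pow2_ge_0).
  replace (x^6) with (x^4 * x^2) by ring.
  assert (x^4 * x^2 <= x^4 * 1) by (apply Rmult_le_compat_l; lra). lra. }
lra. Qed.
Lemma sin_half x : 0 <= x <= 1.7 -> x/2 <= sin x.
Proof. intros H. pose proof (sin_lb3 x ltac:(lra)). assert (x^2 <= 3) by nra.
assert (x^3 <= 3 * x) by (replace (x^3) with (x*x^2) by ring; nra). lra. Qed.
Lemma abs_sin_half x : Rabs x <= 1.7 -> Rabs x / 2 <= Rabs (sin x).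
Proof. intros H. destruct (Rle_dec 0 x).
- rewrite Rabs_right in H by lra. pose proof (sin_half x ltac:(lra)).
  rewrite !Rabs_right; lra.
- rewrite Rabs_left in H |- * by lra. replace (sin x) with (- sin (-x)) by (rewrite sin_neg; ring).
  rewrite Rabs_Ropp. pose proof (sin_half (-x) ltac:(lra)).
  rewrite Rabs_right; lra.
Qed.
Lemma abs_sin_le_pos x : 0 <= x -> Rabs (sin x) <= x.
Proof. intros h. destruct (Req_dec x 0). subst. rewrite sin_0, Rabs_R0. lra.
pose proof (sin_lt_x x ltac:(lra)). destruct (Rle_dec x PI).
+ pose proof (sin_ge_0 x h r). rewrite Rabs_right; lra.
+ apply Rnot_le_lt in n. pose proof (SIN_bound x). pose proof PI_gt3. unfold Rabs; destruct Rcase_abs; lra.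
Qed.
Lemma abs_sin_le x : Rabs (sin x) <= Rabs x.
Proof. destruct (Rle_dec 0 x).
- rewrite (Rabs_right x) by lra. now apply abs_sin_le_pos.
- rewrite (Rabs_left x) by lra. replace (sin x) with (- sin (-x)) by (rewrite sin_neg; ring).
  rewrite Rabs_Ropp. apply abs_sin_le_pos; lra.
Qed.

Lemma cont_plus (f g : R -> R) x : continuous f x -> continuous g x -> continuous (fun y => f y + g y) x.
Proof. intros. exact (continuous_plus f g x H H0). Qed.
Lemma cont_mult (f g : R -> R) x : continuous f x -> continuous g x -> continuous (fun y => f y * g y) x.
Proof. intros. exact (continuous_mult f g x H H0). Qed.
Lemma cont_opp (f : R -> R) x : continuous f x -> continuous (fun y => - f y) x.
Proof. intros. exact (continuous_opp f x H). Qed.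
Lemma cont_inv (f : R -> R) x : continuous f x -> f x <> 0 -> continuous (fun y => / f y) x.
Proof. intros. exact (continuous_Rinv_comp f x H H0). Qed.

Lemma C1k_S_weak m V f : C1k (S m) V f -> C1k m V f.
Proof. revert f. induction m; intros f [Hc [Hd Hk]]; simpl.
- split; [exact Hc|exact I].
- split; [exact Hc|]. split; [exact Hd|]. apply IHm. exact Hk.
Qed.

Lemma C1k_cont m V f : C1k m V f -> forall x, V x -> continuous f x.
Proof. destruct m; intros [H _]; exact H. Qed.

Lemma C1k_ext m V f g : open V -> (forall x, V x -> f x = g x) -> C1k m V f -> C1k m V g.
Proof. intros HV. revert f g. induction m; intros f g E [Hc Hr].
- split; auto. intros x Vx. apply (continuous_ext_loc g f x).
  apply (locally_open V); auto. auto.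
- destruct Hr as [Hd Hk]. split; [|split].
  + intros x Vx. apply (continuous_ext_loc g f x).
    apply (locally_open V); auto. auto.
  + intros x Vx. apply (ex_derive_ext_loc f g x). apply (locally_open V); auto. auto.
  + apply (IHm (Derive f)); auto. intros x Vx. apply Derive_ext_loc.
    apply (locally_open V); auto.
Qed.


Lemma C1k_const m V c : open V -> C1k m V (fun _ => c).
Proof. intros HV. revert c. induction m; intros c.
- split; [intros; apply continuous_const|exact I].
- split; [intros; apply continuous_const|]. split.
  + intros; apply ex_derive_const.
  + apply (C1k_ext m V (fun _ => 0)); auto. intros. symmetry. apply Derive_const.
Qed.

Lemma C1k_plus m V f g : open V -> C1k m V f -> C1k m V g -> C1k m V (fun x => f x + g x).
Proof. intros HV. revert f g. induction m; intros f g [Hcf Hf] [Hcg Hg].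
- split; [|exact I]. intros; apply cont_plus; auto.
- destruct Hf as [Hdf Hkf]; destruct Hg as [Hdg Hkg]. split; [|split].
  + intros; apply cont_plus; auto.
  + intros x Vx. apply (ex_derive_plus f g); auto.
  + apply (C1k_ext m V (fun x => Derive f x + Derive g x)); auto.
    intros x Vx. symmetry. apply Derive_plus; auto.
Qed.

Lemma C1k_opp m V f : open V -> C1k m V f -> C1k m V (fun x => - f x).
Proof. intros HV. revert f. induction m; intros f [Hcf Hf].
- split; [|exact I]. intros; apply cont_opp; auto.
- destruct Hf as [Hdf Hkf]. split; [|split].
  + intros; apply cont_opp; auto.
  + intros x Vx. apply (ex_derive_opp f); auto.
  + apply (C1k_ext m V (fun x => - Derive f x)); auto.
    intros x Vx. symmetry. apply Derive_opp.
Qed.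

Lemma C1k_mult m V f g : open V -> C1k m V f -> C1k m V g -> C1k m V (fun x => f x * g x).
Proof. intros HV. revert f g. induction m; intros f g Cf Cg.
- destruct Cf as [Hcf _]; destruct Cg as [Hcg _].
  split; [|exact I]. intros; apply cont_mult; auto.
- pose proof (C1k_S_weak _ _ _ Cf) as Cf'. pose proof (C1k_S_weak _ _ _ Cg) as Cg'.
  destruct Cf as [Hcf [Hdf Hkf]]; destruct Cg as [Hcg [Hdg Hkg]]. split; [|split].
  + intros; apply cont_mult; auto.
  + intros x Vx. apply (ex_derive_mult f g); auto.
  + apply (C1k_ext m V (fun x => Derive f x * g x + f x * Derive g x)); auto.
    * intros x Vx. symmetry. apply Derive_mult; auto.
    * apply C1k_plus; auto.
Qed.

Lemma C1k_inv m V g : open V -> (forall x, V x -> g x <> 0) -> C1k m V g -> C1k m V (fun x => / g x).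
Proof. intros HV Hnz. revert g Hnz. induction m; intros g Hnz Cg.
- destruct Cg as [Hcg _].
  split; [|exact I]. intros; apply cont_inv; auto.
- pose proof (C1k_S_weak _ _ _ Cg) as Cg'.
  destruct Cg as [Hcg [Hdg Hkg]]. split; [|split].
  + intros; apply cont_inv; auto.
  + intros x Vx. apply (ex_derive_inv g); auto.
  + apply (C1k_ext m V (fun x => - Derive g x * (/ g x * / g x))); auto.
    * intros x Vx. symmetry. rewrite Derive_inv; auto. field. auto.
    * apply C1k_mult; auto. apply C1k_opp; auto. apply C1k_mult; auto.
Qed.

Lemma C2k_S_weak m U f : C2k (S m) U f -> C2k m U f.
Proof. revert f. induction m; intros f [Hc [Hd [Hx Hy]]]; simpl.
- split; [exact Hc|exact I].
- split; [exact Hc|]. split; [exact Hd|]. split; apply IHm; assumption.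
Qed.

Lemma C2k_cont m U f : C2k m U f -> forall p, U p -> continuous (fun q : R * R => f (fst q) (snd q)) p.
Proof. destruct m; intros [H _]; exact H. Qed.

Lemma C2k_weak m n U f : (m <= n)%nat -> C2k n U f -> C2k m U f.
Proof. induction 1; auto. intros H0. apply IHle. apply C2k_S_weak. auto. Qed.

Lemma C1k_weak m n V f : (m <= n)%nat -> C1k n V f -> C1k m V f.
Proof. induction 1; auto. intros H0. apply IHle. apply C1k_S_weak. auto. Qed.

Definition px (f : R -> R -> R) := fun x y => Derive (fun x' => f x' y) x.
Definition py (f : R -> R -> R) := fun x y => Derive (fun y' => f x y') y.

Lemma cont2d (f : R -> R -> R) p : continuous (fun q : R * R => f (fst q) (snd q)) p ->
  continuity_2d_pt f (fst p) (snd p).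
Proof. intros H. destruct p as [x y]. apply continuity_2d_pt_filterlim. exact H. Qed.

Lemma mvt_partial (g : R -> R) a b : (forall c, Rmin a b <= c <= Rmax a b -> ex_derive g c) ->
  exists c, Rmin a b <= c <= Rmax a b /\ g b - g a = Derive g c * (b - a).
Proof. intros H. apply (MVT_gen g a b (Derive g)).
- intros x Hx. apply Derive_correct. apply H; lra.
- intros x Hx. apply (proj2 (continuity_pt_filterlim g x)). apply (ex_derive_continuous g). apply H; lra.
Qed.

Lemma Rmin_Rmax_abs a b c : Rmin a b <= c <= Rmax a b -> Rabs (c - a) <= Rabs (b - a).
Proof. intros H. unfold Rmin, Rmax in H. destruct (Rle_dec a b); unfold Rabs; repeat destruct Rcase_abs; lra. Qed.

Lemma diff_of_partials (f : R -> R -> R) x0 y0 (d : posreal) :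
  (forall u v, Rabs (u - x0) < d -> Rabs (v - y0) < d ->
     ex_derive (fun x => f x v) u /\ ex_derive (fun y => f u y) v) ->
  continuity_2d_pt (px f) x0 y0 -> continuity_2d_pt (py f) x0 y0 ->
  differentiable_pt_lim f x0 y0 (px f x0 y0) (py f x0 y0).
Proof.
intros Hd Cx Cy eps.
assert (he : 0 < eps / 2) by (destruct eps; simpl; lra).
destruct (Cx (mkposreal _ he)) as [d1 H1]. destruct (Cy (mkposreal _ he)) as [d2 H2].
simpl in H1, H2.
assert (hd : 0 < Rmin d (Rmin d1 d2)).
{ destruct d, d1, d2; simpl. repeat apply Rmin_pos; auto. }
exists (mkposreal _ hd). simpl. intros u v Hu Hv.
assert (Hu1 : Rabs (u - x0) < d) by (eapply Rlt_le_trans; [exact Hu|apply Rmin_l]).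
assert (Hv1 : Rabs (v - y0) < d) by (eapply Rlt_le_trans; [exact Hv|apply Rmin_l]).
assert (Hu2 : Rabs (u - x0) < d1) by (eapply Rlt_le_trans; [exact Hu|eapply Rle_trans; [apply Rmin_r|apply Rmin_l]]).
assert (Hv2 : Rabs (v - y0) < d1) by (eapply Rlt_le_trans; [exact Hv|eapply Rle_trans; [apply Rmin_r|apply Rmin_l]]).
assert (Hu3 : Rabs (u - x0) < d2) by (eapply Rlt_le_trans; [exact Hu|eapply Rle_trans; [apply Rmin_r|apply Rmin_r]]).
assert (Hv3 : Rabs (v - y0) < d2) by (eapply Rlt_le_trans; [exact Hv|eapply Rle_trans; [apply Rmin_r|apply Rmin_r]]).
destruct (mvt_partial (fun x => f x v) x0 u) as [c [Hc Ec]].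
{ intros c Hc. apply Hd; auto. pose proof (Rmin_Rmax_abs _ _ _ Hc). lra. }
destruct (mvt_partial (fun y => f x0 y) y0 v) as [c' [Hc' Ec']].
{ intros c' Hc'. apply Hd; auto. rewrite Rminus_eq_0, Rabs_R0. destruct d; simpl; lra.
  pose proof (Rmin_Rmax_abs _ _ _ Hc'). lra. }
pose proof (Rmin_Rmax_abs _ _ _ Hc) as Ac. pose proof (Rmin_Rmax_abs _ _ _ Hc') as Ac'.
assert (B1 : Rabs (px f c v - px f x0 y0) < eps/2) by (apply H1; lra).
assert (B2 : Rabs (py f x0 c' - py f x0 y0) < eps/2).
{ apply H2; [rewrite Rminus_eq_0, Rabs_R0; destruct d2; simpl; lra|lra]. }
replace (f u v - f x0 y0 - (px f x0 y0 * (u - x0) + py f x0 y0 * (v - y0)))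
  with ((px f c v - px f x0 y0) * (u - x0) + (py f x0 c' - py f x0 y0) * (v - y0)).
2:{ unfold px, py. simpl in Ec, Ec'. lra. }
eapply Rle_trans; [apply Rabs_triang|]. rewrite !Rabs_mult.
assert (Rabs (u - x0) <= Rmax (Rabs (u - x0)) (Rabs (v - y0))) by apply Rmax_l.
assert (Rabs (v - y0) <= Rmax (Rabs (u - x0)) (Rabs (v - y0))) by apply Rmax_r.
assert (Rabs (px f c v - px f x0 y0) * Rabs (u - x0) <= eps/2 * Rmax (Rabs (u - x0)) (Rabs (v - y0))).
{ apply Rmult_le_compat; try apply Rabs_pos; lra. }
assert (Rabs (py f x0 c' - py f x0 y0) * Rabs (v - y0) <= eps/2 * Rmax (Rabs (u - x0)) (Rabs (v - y0))).
{ apply Rmult_le_compat; try apply Rabs_pos; lra. }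
lra.
Qed.

Lemma open_box (U : R * R -> Prop) x y : open U -> U (x, y) ->
  exists d : posreal, forall u v, Rabs (u - x) < d -> Rabs (v - y) < d -> U (u, v).
Proof. intros HU Hxy. specialize (HU (x,y) Hxy).
assert (H : locally_2d (fun u v => U (u, v)) x y).
{ apply locally_2d_locally. eapply filter_imp; [|exact HU]. intros [a b]; simpl; auto. }
exact H.
Qed.

Lemma C2k_partials m U f : C2k (S m) U f ->
  (forall p, U p -> ex_derive (fun x => f x (snd p)) (fst p) /\ ex_derive (fun y => f (fst p) y) (snd p))
  /\ C2k m U (px f) /\ C2k m U (py f).
Proof. intros [_ H]. exact H. Qed.

Lemma chain2 m U f x y : open U -> U (x, y) -> C2k (S m) U f ->
  differentiable_pt_lim f x y (px f x y) (py f x y).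
Proof. intros HU Hxy Cf. destruct (C2k_partials _ _ _ Cf) as [Hd [Cx Cy]].
destruct (open_box U x y HU Hxy) as [d Hb].
apply diff_of_partials with d.
- intros u v Hu Hv. apply (Hd (u, v)). auto.
- apply (cont2d (px f) (x,y)). apply (C2k_cont m U); auto.
- apply (cont2d (py f) (x,y)). apply (C2k_cont m U); auto.
Qed.

Lemma C1k_comp m U V f h : open U -> open V -> C2k m U f -> C1k m V h ->
  (forall x, V x -> U (x, h x)) -> C1k m V (fun x => f x (h x)).
Proof. intros HU HV. revert f h. induction m; intros f h Cf Ch Hin.
- split; [|exact I]. intros x Vx.
  apply (continuous_comp_2 (fun x => x) h f x).
  + apply continuous_id.
  + apply (C1k_cont _ V _ Ch); auto.
  + apply (C2k_cont _ U _ Cf (x, h x)); auto.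
- pose proof (C1k_S_weak _ _ _ Ch) as Ch'.
  assert (HD : forall x, V x -> is_derive (fun x => f x (h x)) x
             (px f x (h x) + py f x (h x) * Derive h x)).
  { intros x Vx. apply is_derive_Reals.
    replace (px f x (h x) + py f x (h x) * Derive h x)
      with (px f x (h x) * 1 + py f x (h x) * Derive h x) by ring.
    apply (derivable_pt_lim_comp_2d f (fun x => x) h).
    - apply (chain2 m U); auto.
    - apply derivable_pt_lim_id.
    - apply is_derive_Reals. apply Derive_correct. destruct Ch as [_ [Hdh _]]. auto. }
  destruct (C2k_partials _ _ _ Cf) as [_ [Cx Cy]].
  split; [|split].
  + intros x Vx. apply (continuous_comp_2 (fun x => x) h f x).
    * apply continuous_id.
    * apply (C1k_cont _ V _ Ch); auto.
    * apply (C2k_cont _ U _ Cf (x, h x)); auto.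
  + intros x Vx. eexists. apply HD; auto.
  + apply (C1k_ext m V (fun x => px f x (h x) + py f x (h x) * Derive h x)); auto.
    * intros x Vx. symmetry. apply is_derive_unique. apply HD; auto.
    * apply C1k_plus; auto. apply C1k_mult; auto. destruct Ch as [_ [_ Ck]]. exact Ck.
Qed.

Lemma cont_loc (f : R -> R) x : continuous f x ->
  forall eps : posreal, locally x (fun u => Rabs (f u - f x) < eps).
Proof. intros H. apply continuity_pt_locally. apply (proj2 (continuity_pt_filterlim f x)). exact H. Qed.

Lemma loc_cont (f : R -> R) x : (forall eps : posreal, locally x (fun u => Rabs (f u - f x) < eps)) ->
  continuous f x.
Proof. intros H. apply (proj1 (continuity_pt_filterlim f x)). apply continuity_pt_locally. exact H. Qed.

Lemma root_exists (G : R -> R) a b : a < b ->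
  (forall v, a <= v <= b -> continuity_pt G v) -> G a < 0 -> 0 < G b ->
  exists v, a < v < b /\ G v = 0.
Proof. intros hab Hc Ha Hb. destruct (IVT_interv G a b Hc hab Ha Hb) as [v [Hv E]].
exists v. split; auto. destruct Hv as [h1 h2]. split.
- destruct h1; auto. subst. lra.
- destruct h2; auto. subst. lra.
Qed.

Definition sincr (G : R -> R) a b := forall v1 v2, a <= v1 -> v1 < v2 -> v2 <= b -> G v1 < G v2.

Lemma root_unique G a b v1 v2 : sincr G a b -> a <= v1 <= b -> a <= v2 <= b ->
  G v1 = G v2 -> v1 = v2.
Proof. intros H h1 h2 E. destruct (Rtotal_order v1 v2) as [l|[l|l]]; auto.
- pose proof (H v1 v2 ltac:(lra) l ltac:(lra)). lra.
- pose proof (H v2 v1 ltac:(lra) l ltac:(lra)). lra.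
Qed.

Lemma root_fun (H : R -> R -> R) lo hi a b : a < b ->
  (forall p, lo < p < hi -> sincr (H p) a b) ->
  (forall p, lo < p < hi -> H p a < 0 /\ 0 < H p b) ->
  (forall p v, lo < p < hi -> a <= v <= b -> continuity_pt (H p) v) ->
  (forall p v, lo < p < hi -> a <= v <= b -> continuous (fun q => H q v) p) ->
  exists r : R -> R, forall p, lo < p < hi -> a < r p < b /\ H p (r p) = 0 /\ continuous r p.
Proof.
intros hab Hinc Hs Hc1 Hc2.
assert (Ex : forall p, exists v, lo < p < hi -> a < v < b /\ H p v = 0).
{ intros p. destruct (classic (lo < p < hi)) as [Hp|Hp].
  - destruct (Hs p Hp) as [h1 h2]. destruct (root_exists (H p) a b hab (fun v hv => Hc1 p v Hp hv) h1 h2) as [v Hv].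
    exists v; auto.
  - exists 0. intros; contradiction. }
exists (fun p => proj1_sig (constructive_indefinite_description _ (Ex p))).
intros p Hp.
destruct (constructive_indefinite_description _ (Ex p)) as [v0 Hv0]. simpl.
destruct (Hv0 Hp) as [Hv0b Hv0e]. split; auto. split; auto.
apply loc_cont. intros eps.
set (l := Rmax a (v0 - eps/2)). set (h := Rmin b (v0 + eps/2)).
assert (Hl : a <= l < v0) by (unfold l; destruct eps; simpl; unfold Rmax; destruct Rle_dec; lra).
assert (Hh : v0 < h <= b) by (unfold h; destruct eps; simpl; unfold Rmin; destruct Rle_dec; lra).
assert (Hl0 : H p l < 0).
{ destruct (Req_dec l a) as [e|e]. rewrite e. apply Hs; auto.
  rewrite <- Hv0e. apply (Hinc p Hp); lra. }
assert (Hh0 : 0 < H p h).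
{ destruct (Req_dec h b) as [e|e]. rewrite e. apply Hs; auto.
  rewrite <- Hv0e. apply (Hinc p Hp); lra. }
assert (e1 : 0 < - H p l) by lra. assert (e2 : 0 < H p h) by lra.
pose proof (cont_loc _ _ (Hc2 p l Hp ltac:(lra)) (mkposreal _ e1)) as L1.
pose proof (cont_loc _ _ (Hc2 p h Hp ltac:(lra)) (mkposreal _ e2)) as L2.
assert (L3 : locally p (fun q => lo < q < hi)).
{ apply (locally_interval _ p lo hi); simpl; try lra. auto. }
generalize (filter_and _ _ L3 (filter_and _ _ L1 L2)).
apply filter_imp. intros q [Hq [Q1 Q2]]. simpl in Q1, Q2.
destruct (constructive_indefinite_description _ (Ex q)) as [vq Hvq]. simpl.
destruct (Hvq Hq) as [Hvqb Hvqe].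
assert (A1 : H q l < 0) by (unfold Rabs in Q1; destruct Rcase_abs; lra).
assert (A2 : 0 < H q h) by (unfold Rabs in Q2; destruct Rcase_abs; lra).
assert (l < vq).
{ destruct (Rle_lt_dec vq l) as [k|k]; auto. destruct k as [k|k].
  - pose proof (Hinc q Hq vq l ltac:(lra) k ltac:(lra)). lra.
  - subst. lra. }
assert (vq < h).
{ destruct (Rle_lt_dec h vq) as [k|k]; auto. destruct k as [k|k].
  - pose proof (Hinc q Hq h vq ltac:(lra) k ltac:(lra)). lra.
  - subst. lra. }
assert (l >= v0 - eps/2) by (unfold l; apply Rle_ge, Rmax_r).
assert (h <= v0 + eps/2) by (unfold h; apply Rmin_r).
destruct (constructive_indefinite_description _ (Ex p)) as [v1 Hv1]; simpl.
destruct (Hv1 Hp) as [Hv1b Hv1e].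
assert (v1 = v0) by (apply (root_unique (H p) a b); auto; lra).
subst v1. unfold Rabs; destruct Rcase_abs; destruct eps; simpl in *; lra.
Qed.

Lemma alg_impl A B h D q : B <> 0 -> 0 <= q <= 1/4 ->
  Rabs (A*h + B*D) <= q * Rabs B * (Rabs h + Rabs D) ->
  Rabs (D + A/B*h) <= q * (2 * Rabs (A/B) + 3) * Rabs h.
Proof. intros HB Hq H.
assert (E : A*h + B*D = B * (D + A/B*h)) by (field; auto).
rewrite E, Rabs_mult in H.
assert (PB : 0 < Rabs B) by (apply Rabs_pos_lt; auto).
assert (H1 : Rabs (D + A/B*h) <= q * (Rabs h + Rabs D)).
{ apply (Rmult_le_reg_l (Rabs B)); auto. lra. }
assert (H2 : Rabs D <= Rabs (D + A/B*h) + Rabs (A/B) * Rabs h).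
{ replace D with ((D + A/B*h) + (- (A/B*h))) at 1 by ring.
  eapply Rle_trans; [apply Rabs_triang|]. rewrite Rabs_Ropp, Rabs_mult. lra. }
set (X := Rabs (D + A/B*h)) in *. set (L := Rabs (A/B)) in *.
assert (0 <= L) by apply Rabs_pos. assert (0 <= Rabs h) by apply Rabs_pos.
assert (0 <= X) by apply Rabs_pos.
assert (X * (1 - q) <= q * (1 + L) * Rabs h) by nra.
assert (q * (1 + L) * Rabs h <= q * (2 * L + 3) * Rabs h * (1 - q)).
{ assert (0 <= q * Rabs h) by nra. nra. }
nra.
Qed.

Lemma implicit_deriv (F : R -> R -> R) (g : R -> R) s0 A B :
  differentiable_pt_lim F s0 (g s0) A B -> B <> 0 ->
  continuous g s0 ->
  locally s0 (fun s => F s (g s) = 0) -> F s0 (g s0) = 0 ->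
  is_derive g s0 (- (A / B)).
Proof.
intros HD HB Hg Hz Hz0. apply is_derive_Reals.
intros eps Heps.
set (C := Rabs (A/B)).
assert (PC : 0 <= C) by apply Rabs_pos.
set (q := Rmin (1/4) (eps / (2 * (2 * C + 3)))).
assert (Pq : 0 < q) by (unfold q; apply Rmin_pos; [lra|apply Rdiv_lt_0_compat; lra]).
assert (PBq : 0 < q * Rabs B) by (apply Rmult_lt_0_compat; auto; apply Rabs_pos_lt; auto).
destruct (HD (mkposreal _ PBq)) as [d Hd]. simpl in Hd.
destruct Hz as [d1 Hd1].
pose proof (cont_loc g s0 Hg d) as [d2 Hd2].
assert (Pm : 0 < Rmin d1 d2) by (apply Rmin_pos; [destruct d1|destruct d2]; auto).
assert (Pm2 : 0 < Rmin (Rmin d1 d2) d) by (apply Rmin_pos; [auto|destruct d; auto]).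
exists (mkposreal _ Pm2). simpl. intros h Hh0 Hh.
assert (B1 : ball s0 d1 (s0 + h)).
{ unfold ball; simpl; unfold AbsRing_ball, abs, minus, plus, opp; simpl.
  replace (s0 + h + - s0) with h by ring. eapply Rlt_le_trans; [exact Hh|].
  eapply Rle_trans; apply Rmin_l. }
assert (B2 : ball s0 d2 (s0 + h)).
{ unfold ball; simpl; unfold AbsRing_ball, abs, minus, plus, opp; simpl.
  replace (s0 + h + - s0) with h by ring. eapply Rlt_le_trans; [exact Hh|].
  eapply Rle_trans; [apply Rmin_l|apply Rmin_r]. }
specialize (Hd1 _ B1). specialize (Hd2 _ B2). simpl in Hd1.
set (D := g (s0 + h) - g s0).
assert (Hdd : Rabs (s0 + h - s0) < d).
{ replace (s0 + h - s0) with h by ring. eapply Rlt_le_trans; [exact Hh|apply Rmin_r]. }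
specialize (Hd (s0 + h) (g (s0 + h)) Hdd Hd2).
rewrite Hd1, Hz0 in Hd.
replace (s0 + h - s0) with h in Hd by ring.
assert (Hm : Rmax (Rabs h) (Rabs (g (s0 + h) - g s0)) <= Rabs h + Rabs D).
{ unfold D. pose proof (Rabs_pos h). pose proof (Rabs_pos (g (s0+h) - g s0)).
  unfold Rmax; destruct Rle_dec; lra. }
assert (Hd' : Rabs (A * h + B * D) <= q * Rabs B * (Rabs h + Rabs D)).
{ replace (A * h + B * D) with (- (0 - 0 - (A * h + B * (g (s0 + h) - g s0)))) by (unfold D; ring).
  rewrite Rabs_Ropp. eapply Rle_trans; [exact Hd|]. apply Rmult_le_compat_l; lra. }
assert (Hq : 0 <= q <= 1/4) by (split; [lra|apply Rmin_l]).
pose proof (alg_impl A B h D q HB Hq Hd') as K.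
fold C in K.
replace (D / h - - (A / B)) with ((D + A/B*h) / h) by (field; auto).
unfold Rdiv at 1. rewrite Rabs_mult, Rabs_inv.
assert (Ph : 0 < Rabs h) by (apply Rabs_pos_lt; auto).
apply (Rmult_lt_reg_r (Rabs h)); auto. rewrite Rmult_assoc, Rinv_l by lra. rewrite Rmult_1_r.
eapply Rle_lt_trans; [exact K|].
assert (q * (2 * C + 3) <= eps / 2).
{ unfold q. eapply Rle_trans. apply Rmult_le_compat_r; [lra|apply Rmin_r].
  right. field. lra. }
nra.
Qed.

Lemma open_interval a b : open (fun s : R => a < s < b).
Proof. apply open_and; [apply open_gt|apply open_lt]. Qed.

Lemma ift_C7 (F : R -> R -> R) (U : R * R -> Prop) (rho : R) (g : R -> R) :
  open U -> C2k 7 U F ->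
  (forall s, -rho < s < rho -> U (s, g s)) ->
  (forall s, -rho < s < rho -> F s (g s) = 0) ->
  (forall s, -rho < s < rho -> continuous g s) ->
  (forall s, -rho < s < rho -> py F s (g s) <> 0) ->
  C1k 7 (fun s => -rho < s < rho) g.
Proof.
intros HU CF Hin Hz Hc Hnz.
set (V := fun s => -rho < s < rho).
assert (HV : open V) by apply open_interval.
destruct (C2k_partials _ _ _ CF) as [_ [Cx Cy]].
assert (HD : forall s, V s -> is_derive g s (- px F s (g s) * / py F s (g s))).
{ intros s Vs. replace (- px F s (g s) * / py F s (g s)) with (- (px F s (g s) / py F s (g s))) by (unfold Rdiv; ring).
  apply (implicit_deriv F g s); auto.
  - apply (chain2 6 U); auto.
  - apply (locally_interval _ s (-rho) rho); simpl; try apply Vs. intros y h1 h2. apply Hz; auto. }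
assert (K : forall m, (m <= 7)%nat -> C1k m V g).
{ induction m; intros Hm.
  - split; [|exact I]. intros; apply Hc; auto.
  - split; [intros; apply Hc; auto|]. split.
    + intros x Vx. eexists. apply HD; auto.
    + apply (C1k_ext m V (fun s => - px F s (g s) * / py F s (g s))); auto.
      * intros x Vx. symmetry. apply is_derive_unique. apply HD; auto.
      * assert (Hm' : (m <= 6)%nat) by lia.
        pose proof (IHm ltac:(lia)) as Cg.
        apply C1k_mult; auto.
        -- apply C1k_opp; auto. apply (C1k_comp m U V); auto. apply (C2k_weak m 6); auto.
        -- apply C1k_inv; auto. apply (C1k_comp m U V); auto. apply (C2k_weak m 6); auto. }
apply K; lia.
Qed.

Lemma trig_shift t psi v (j : nat) : t = psi + 2 * INR j * PI + v ->
  cos t * cos psi + sin t * sin psi = cos v /\ sin t * cos psi - cos t * sin psi = sin v.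
Proof. intros E. rewrite <- cos_minus, <- sin_minus.
replace (t - psi) with (v + 2 * INR j * PI) by (rewrite E; ring).
rewrite cos_period, sin_period. auto. Qed.

Lemma is_derive_shift (f : R -> R) p v : ex_derive f (p + v) ->
  is_derive (fun u => f (p + u)) v (Derive f (p + v)).
Proof. intros H.
assert (Hd : is_derive (fun u => p + u) v 1) by (auto_derive; auto; ring).
pose proof (is_derive_comp f (fun u => p + u) v (Derive f (p+v)) 1 (Derive_correct _ _ H) Hd) as K.
unfold scal in K; simpl in K; unfold mult in K; simpl in K. rewrite Rmult_1_l in K. exact K.
Qed.

Lemma abs_le_lo x e : Rabs x <= e -> - e <= x.
Proof. unfold Rabs; destruct Rcase_abs; lra. Qed.
Lemma abs_le_hi x e : Rabs x <= e -> x <= e.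
Proof. unfold Rabs; destruct Rcase_abs; lra. Qed.
Lemma abs_le_intro x e : - e <= x -> x <= e -> Rabs x <= e.
Proof. unfold Rabs; destruct Rcase_abs; lra. Qed.

Lemma isd_eq (f : R -> R) x l l' : is_derive f x l -> l = l' -> is_derive f x l'.
Proof. intros; subst; auto. Qed.

Lemma isd_mulc (f : R -> R) x l c : is_derive f x l -> is_derive (fun y => f y * c) x (l * c).
Proof. intros H. apply (isd_eq _ _ (plus (mult l c) (mult (f x) zero))).
apply (is_derive_mult f (fun _ => c)); auto. apply (is_derive_const c x). intros; apply Rmult_comm.
unfold plus, mult, zero; simpl. ring. Qed.

Lemma isd_minus (f g : R -> R) x l1 l2 : is_derive f x l1 -> is_derive g x l2 ->
  is_derive (fun y => f y - g y) x (l1 - l2).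
Proof. intros H1 H2. apply (isd_eq _ _ (minus l1 l2)).
apply (is_derive_minus f g); auto. unfold minus, plus, opp; simpl. ring. Qed.

Lemma isd_plus (f g : R -> R) x l1 l2 : is_derive f x l1 -> is_derive g x l2 ->
  is_derive (fun y => f y + g y) x (l1 + l2).
Proof. intros H1 H2. apply (isd_eq _ _ (plus l1 l2)).
apply (is_derive_plus f g); auto. unfold plus; simpl. ring. Qed.

Definition CurveHyp (X Y : R -> R) (alpha beta T d mu : R) : Prop :=
  0 < d <= 1/2 /\ alpha <= -2*d /\ 0 < T < beta /\ 0 <= mu <= d/32/8 /\
  (forall t, -d < t < beta - d/4 -> ex_derive X t /\ ex_derive Y t /\
       Rabs (Derive Y t - cos t) <= 1/8 /\ Rabs (Derive X t + sin t) <= 1/8) /\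
  (forall t, alpha < t < beta -> Rabs (X t - cos t) <= mu /\ Rabs (Y t - sin t) <= mu) /\
  (forall t, alpha < t < beta -> alpha < t + T < beta -> X (t+T) = X t /\ Y (t+T) = Y t) /\
  (forall u1 u2, 0 <= u1 < T -> 0 <= u2 < T -> X u1 = X u2 -> Y u1 = Y u2 -> u1 = u2).

Definition Hr (X Y : R -> R) (j : nat) psi v :=
  Y (psi + 2 * INR j * PI + v) * cos psi - X (psi + 2 * INR j * PI + v) * sin psi.
Definition Rad0 (X Y : R -> R) (j : nat) psi v :=
  X (psi + 2 * INR j * PI + v) * cos psi + Y (psi + 2 * INR j * PI + v) * sin psi.

Lemma Hr_sincr X Y alpha beta T d mu j psi : CurveHyp X Y alpha beta T d mu ->
  -d + 3*(d/32) < psi + 2 * INR j * PI -> psi + 2 * INR j * PI < beta - d/4 - 3*(d/32) ->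
  sincr (Hr X Y j psi) (-2*(d/32)) (2*(d/32)).
Proof. intros [hd [ha [hT [hmu [hder _]]]]] h1 h2.
set (w := d/32) in *. set (p := psi + 2 * INR j * PI) in *.
intros v1 v2 hv1 hv12 hv2.
set (df := fun v => Derive Y (p + v) * cos psi - Derive X (p + v) * sin psi).
apply (incr_function (Hr X Y j psi) (-3*w) (3*w) df); simpl; try lra.
- intros v hv1' hv2'. unfold Hr, df. fold p.
  destruct (hder (p + v) ltac:(unfold w in *; lra)) as [eX [eY _]].
  apply (isd_minus (fun v => Y (p + v) * cos psi) (fun v => X (p + v) * sin psi)).
  + apply (isd_mulc (fun v => Y (p + v))). apply is_derive_shift; auto.
  + apply (isd_mulc (fun v => X (p + v))). apply is_derive_shift; auto.
- intros v hv1' hv2'. unfold df.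
  destruct (hder (p + v) ltac:(unfold w in *; lra)) as [_ [_ [b1 b2]]].
  destruct (trig_shift (p + v) psi v j ltac:(unfold p; ring)) as [tc _].
  assert (cv : 1 - v^2/2 <= cos v) by (apply cos_lb2; unfold w in *; split; nra).
  assert (v^2 <= (3*w)^2) by nra.
  assert (3 * w <= 3/64) by (unfold w; lra).
  set (e1 := Derive Y (p + v) - cos (p + v)) in *.
  set (e2 := Derive X (p + v) + sin (p + v)) in *.
  replace (Derive Y (p + v) * cos psi - Derive X (p + v) * sin psi)
    with (cos (p + v) * cos psi + sin (p + v) * sin psi + (e1 * cos psi - e2 * sin psi)) by (unfold e1, e2; ring).
  rewrite tc.
  assert (Rabs (e1 * cos psi - e2 * sin psi) <= 1/4).
  { eapply Rle_trans; [apply Rabs_triang|]. rewrite Rabs_Ropp, !Rabs_mult.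
    pose proof (COS_bound psi). pose proof (SIN_bound psi).
    assert (Rabs (cos psi) <= 1) by (unfold Rabs; destruct Rcase_abs; lra).
    assert (Rabs (sin psi) <= 1) by (unfold Rabs; destruct Rcase_abs; lra).
    pose proof (Rabs_pos e1). pose proof (Rabs_pos e2).
    assert (Rabs e1 * Rabs (cos psi) <= 1/8) by nra.
    assert (Rabs e2 * Rabs (sin psi) <= 1/8) by nra. lra. }
  assert (- (1/4) <= e1 * cos psi - e2 * sin psi) by (apply abs_le_lo; auto).
  nra.
Qed.

Lemma Hr_sign X Y alpha beta T d mu j psi : CurveHyp X Y alpha beta T d mu ->
  -d + 3*(d/32) < psi + 2 * INR j * PI -> psi + 2 * INR j * PI < beta - d/4 - 3*(d/32) ->
  Hr X Y j psi (-(d/32)) < 0 /\ 0 < Hr X Y j psi (d/32).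
Proof. intros [hd [ha [hT [hmu [_ [happ _]]]]]] h1 h2.
set (w := d/32) in *. set (p := psi + 2 * INR j * PI) in *.
assert (key : forall v, Rabs v <= w -> Rabs (Hr X Y j psi v - sin v) <= w/4).
{ intros v hv. unfold Hr. fold p.
  assert (hv' : -w <= v <= w) by (split; [apply abs_le_lo|apply abs_le_hi]; auto).
  destruct (happ (p + v) ltac:(unfold w in *; lra)) as [bX bY].
  destruct (trig_shift (p + v) psi v j ltac:(unfold p; ring)) as [_ ts].
  set (eX := X (p + v) - cos (p + v)) in *. set (eY := Y (p + v) - sin (p + v)) in *.
  replace (Y (p + v) * cos psi - X (p + v) * sin psi - sin v)
    with (eY * cos psi - eX * sin psi) by (rewrite <- ts; unfold eX, eY; ring).
  eapply Rle_trans; [apply Rabs_triang|]. rewrite Rabs_Ropp, !Rabs_mult.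
  pose proof (COS_bound psi). pose proof (SIN_bound psi).
  assert (Rabs (cos psi) <= 1) by (apply abs_le_intro; lra).
  assert (Rabs (sin psi) <= 1) by (apply abs_le_intro; lra).
  pose proof (Rabs_pos eX). pose proof (Rabs_pos eY).
  assert (Rabs eY * Rabs (cos psi) <= mu) by nra.
  assert (Rabs eX * Rabs (sin psi) <= mu) by nra. unfold w in *; lra. }
assert (sw : w/2 <= sin w) by (apply sin_half; unfold w; lra).
split.
- pose proof (key (-w) ltac:(rewrite Rabs_Ropp, Rabs_right; unfold w in *; lra)) as K.
  rewrite sin_neg in K. apply abs_le_hi in K. unfold w in *; lra.
- pose proof (key w ltac:(rewrite Rabs_right; unfold w in *; lra)) as K.
  apply abs_le_lo in K. unfold w in *; lra.
Qed.

Lemma cont_cos x : continuous cos x.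
Proof. exact (ex_derive_continuous cos x (ex_intro _ _ (is_derive_cos x))). Qed.
Lemma cont_sin x : continuous sin x.
Proof. exact (ex_derive_continuous sin x (ex_intro _ _ (is_derive_sin x))). Qed.

Lemma cont_shift (f : R -> R) a x : continuous f (x + a) -> continuous (fun q => f (q + a)) x.
Proof. intros H. apply (continuous_comp (fun q => q + a) f x); auto.
apply (ex_derive_continuous (fun q => q + a)). auto_derive. auto. Qed.

Lemma rev_root X Y alpha beta T d mu j : CurveHyp X Y alpha beta T d mu ->
  exists r : R -> R, forall psi,
    -d + 3*(d/32) - 2 * INR j * PI < psi < beta - d/4 - 3*(d/32) - 2 * INR j * PI ->
    -(d/32) < r psi < d/32 /\ Hr X Y j psi (r psi) = 0 /\ continuous r psi.
Proof. intros CH. pose proof CH as [hd [ha [hT [hmu [hder [happ _]]]]]].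
set (w := d/32) in *.
apply (root_fun (Hr X Y j) _ _ (-w) w).
- unfold w; lra.
- intros p hp v1 v2 h1 h12 h2. apply (Hr_sincr X Y alpha beta T d mu j p CH); unfold w in *; lra.
- intros p hp. apply (Hr_sign X Y alpha beta T d mu j p CH); unfold w in *; lra.
- intros p v hp hv. apply (proj2 (continuity_pt_filterlim _ _)). apply (ex_derive_continuous (Hr X Y j p)).
  destruct (hder (p + 2 * INR j * PI + v) ltac:(unfold w in *; lra)) as [eX [eY _]].
  eexists. unfold Hr.
  apply (isd_minus (fun v => Y (p + 2 * INR j * PI + v) * cos p) (fun v => X (p + 2 * INR j * PI + v) * sin p)).
  + apply (isd_mulc (fun v => Y (p + 2 * INR j * PI + v))). apply is_derive_shift; auto.
  + apply (isd_mulc (fun v => X (p + 2 * INR j * PI + v))). apply is_derive_shift; auto.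
- intros p v hp hv. unfold Hr.
  destruct (hder (p + 2 * INR j * PI + v) ltac:(unfold w in *; lra)) as [eX [eY _]].
  assert (E : forall f : R -> R, ex_derive f (p + 2 * INR j * PI + v) ->
     continuous (fun q => f (q + 2 * INR j * PI + v)) p).
  { intros f hf. eapply continuous_ext; [|apply (cont_shift f (2 * INR j * PI + v) p)].
    intros q; simpl. f_equal. ring. replace (p + (2 * INR j * PI + v)) with (p + 2 * INR j * PI + v) by ring.
    apply (ex_derive_continuous f); auto. }
  apply (cont_plus (fun q => Y (q + 2 * INR j * PI + v) * cos q) (fun q => - (X (q + 2 * INR j * PI + v) * sin q))).
  + apply cont_mult. apply E; auto. apply cont_cos.
  + apply cont_opp. apply cont_mult. apply E; auto. apply cont_sin.
Qed.

Lemma max_idx (r : nat -> R) n : exists m, (m <= n)%nat /\ forall j, (j <= n)%nat -> r j <= r m.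
Proof. induction n.
- exists 0%nat. split; auto. intros j hj. assert (j = 0%nat) by lia. subst. lra.
- destruct IHn as [m [hm Hm]]. destruct (Rle_dec (r (S n)) (r m)).
  + exists m. split; [lia|]. intros j hj. destruct (Nat.eq_dec j (S n)). subst; auto. apply Hm; lia.
  + exists (S n). split; auto. intros j hj. destruct (Nat.eq_dec j (S n)). subst; lra.
    pose proof (Hm j ltac:(lia)). lra.
Qed.

Lemma comb_aux (r : nat -> R) k : (2 <= k)%nat ->
  (forall i j, (i < j)%nat -> (j <= k - 1)%nat -> r i <> r j) -> r k = r 0%nat ->
  r 0%nat < r 1%nat ->
  exists m, (1 <= m <= k - 1)%nat /\ (r (m - 1)%nat - r m) * (r m - r (m + 1)%nat) < 0.
Proof. intros hk hd hk0 h01.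
destruct (max_idx r (k - 1)) as [m [hm Hm]].
assert (m <> 0%nat). { intros e. subst. pose proof (Hm 1%nat ltac:(lia)). lra. }
exists m. split; [lia|].
assert (A : r (m - 1)%nat < r m).
{ pose proof (Hm (m-1)%nat ltac:(lia)). assert (r (m-1)%nat <> r m) by (apply hd; lia). lra. }
assert (B : r (m + 1)%nat < r m).
{ destruct (Nat.eq_dec (m + 1) k) as [e|e].
  - rewrite e, hk0. pose proof (Hm 0%nat ltac:(lia)). assert (r 0%nat <> r m) by (apply hd; lia). lra.
  - pose proof (Hm (m+1)%nat ltac:(lia)). assert (r m <> r (m+1)%nat) by (apply hd; lia). lra. }
assert (0 < r m - r (m-1)%nat) by lra. assert (0 < r m - r (m+1)%nat) by lra. nra.
Qed.

Lemma comb (r : nat -> R) k : (2 <= k)%nat ->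
  (forall i j, (i < j)%nat -> (j <= k - 1)%nat -> r i <> r j) -> r k = r 0%nat ->
  exists m, (1 <= m <= k - 1)%nat /\ (r (m - 1)%nat - r m) * (r m - r (m + 1)%nat) < 0.
Proof. intros hk hd hk0.
destruct (Rlt_dec (r 0%nat) (r 1%nat)).
- apply comb_aux; auto.
- assert (r 0%nat <> r 1%nat) by (apply hd; lia).
  destruct (comb_aux (fun i => - r i) k hk) as [m [hm Hm]].
  + intros i j hij hj e. apply (hd i j hij hj). lra.
  + rewrite hk0; auto.
  + lra.
  + exists m. split; auto. nra.
Qed.

Lemma collide X Y alpha beta T d mu u1 u2 : CurveHyp X Y alpha beta T d mu ->
  -T < u1 -> alpha < u1 -> u2 < T -> u1 < u2 -> u2 < u1 + T -> X u1 = X u2 -> Y u1 = Y u2 -> False.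
Proof. intros [hd [ha [hT [_ [_ [_ [hper hinj]]]]]]] h1 h2 h3 h4 h5 ex ey.
destruct (Rlt_dec u1 0) as [n1|n1].
- destruct (hper u1 ltac:(lra) ltac:(lra)) as [p1 q1].
  destruct (Rlt_dec u2 0) as [n2|n2].
  + destruct (hper u2 ltac:(lra) ltac:(lra)) as [p2 q2].
    assert (u1 + T = u2 + T) by (apply hinj; try lra; congruence). lra.
  + assert (u1 + T = u2) by (apply hinj; try lra; congruence). lra.
- assert (u1 = u2) by (apply hinj; lra || auto). lra.
Qed.

Lemma on_ray X Y j psi v : Hr X Y j psi v = 0 ->
  X (psi + 2 * INR j * PI + v) = Rad0 X Y j psi v * cos psi /\
  Y (psi + 2 * INR j * PI + v) = Rad0 X Y j psi v * sin psi.
Proof. unfold Hr, Rad0. intros H. pose proof (sin2_cos2 psi). unfold Rsqr in *.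
set (a := X (psi + 2 * INR j * PI + v)) in *. set (b := Y (psi + 2 * INR j * PI + v)) in *.
assert (E1 : sin psi * (b * cos psi - a * sin psi) = 0) by (rewrite H; ring).
assert (E2 : cos psi * (b * cos psi - a * sin psi) = 0) by (rewrite H; ring).
assert (E3 : a * (sin psi * sin psi + cos psi * cos psi) = a) by (rewrite H0; ring).
assert (E4 : b * (sin psi * sin psi + cos psi * cos psi) = b) by (rewrite H0; ring).
split; lra.
Qed.

Lemma per2 x : cos (x + 2 * PI) = cos x /\ sin (x + 2 * PI) = sin x.
Proof. rewrite cos_plus, sin_plus, cos_2PI, sin_2PI. split; ring. Qed.

Lemma no_wind X Y alpha beta T d mu (k : nat) : CurveHyp X Y alpha beta T d mu ->
  (2 <= k)%nat -> Rabs (T - 2 * INR k * PI) <= d/32/2 -> False.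
Proof.
intros CH hk hTk. pose proof CH as [hd [ha [hT [hmu [hder [happ [hper hinj]]]]]]].
set (w := d/32) in *. set (c := -d/2).
assert (hTk' : 2 * INR k * PI - w/2 <= T <= 2 * INR k * PI + w/2)
  by (split; [apply abs_le_lo in hTk|apply abs_le_hi in hTk]; lra).
pose proof PI_gt3 as hpi.
assert (hk2 : 2 <= INR k) by (replace 2 with (INR 2) by (simpl; ring); apply le_INR; auto).
assert (Hf : forall j : nat, exists r : R -> R, forall psi,
    -d + 3*(d/32) - 2 * INR j * PI < psi < beta - d/4 - 3*(d/32) - 2 * INR j * PI ->
    -(d/32) < r psi < d/32 /\ Hr X Y j psi (r psi) = 0 /\ continuous r psi)
  by (intros j; apply (rev_root X Y alpha beta T d mu j CH)).
set (rf := fun j => proj1_sig (constructive_indefinite_description _ (Hf j))).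
assert (Hrf : forall j psi, -d + 3*w - 2 * INR j * PI < psi < beta - d/4 - 3*w - 2 * INR j * PI ->
    -w < rf j psi < w /\ Hr X Y j psi (rf j psi) = 0 /\ continuous (rf j) psi).
{ intros j psi hp. unfold rf. destruct (constructive_indefinite_description _ (Hf j)) as [r Hr']. simpl. apply Hr'. exact hp. }
assert (Hval : forall (j : nat) psi, c <= psi + 2 * INR j * PI <= c + 2 * INR k * PI ->
    -d + 3*w - 2 * INR j * PI < psi < beta - d/4 - 3*w - 2 * INR j * PI).
{ intros j psi [h1 h2]. unfold c, w in *. split; lra. }
assert (Huniq : forall (j : nat) psi v, c <= psi + 2 * INR j * PI <= c + 2 * INR k * PI ->
    Rabs v <= 2*w -> Hr X Y j psi v = 0 -> v = rf j psi).
{ intros j psi v hv hv2 hz. pose proof (Hval j psi hv) as hp. destruct (Hrf j psi hp) as [hb [hz' _]].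
  apply (root_unique (Hr X Y j psi) (-2*w) (2*w)).
  - apply (Hr_sincr X Y alpha beta T d mu j psi CH); unfold w in *; lra.
  - split; [apply abs_le_lo in hv2|apply abs_le_hi in hv2]; lra.
  - unfold w in *; lra.
  - congruence. }
set (rho := fun j => Rad0 X Y j c (rf j c)).
assert (Hshift : forall j : nat, (j < k)%nat ->
   rf j (c + 2*PI) = rf (S j) c /\ Rad0 X Y j (c + 2*PI) (rf j (c + 2*PI)) = rho (S j)).
{ intros j hj.
  assert (hjr : INR j + 1 <= INR k) by (rewrite <- S_INR; apply le_INR; lia).
  assert (hj0 : 0 <= INR j) by apply pos_INR.
  assert (Et : forall v, c + 2*PI + 2 * INR j * PI + v = c + 2 * INR (S j) * PI + v) by (intros; rewrite S_INR; ring).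
  destruct (per2 c) as [ec es].
  assert (EH : forall v, Hr X Y j (c + 2*PI) v = Hr X Y (S j) c v) by (intros; unfold Hr; rewrite Et, ec, es; reflexivity).
  assert (ER : forall v, Rad0 X Y j (c + 2*PI) v = Rad0 X Y (S j) c v) by (intros; unfold Rad0; rewrite Et, ec, es; reflexivity).
  assert (hv1 : c <= c + 2*PI + 2 * INR j * PI <= c + 2 * INR k * PI) by (split; nra).
  destruct (Hrf j (c + 2*PI) (Hval _ _ hv1)) as [hb [hz _]].
  assert (e : rf j (c + 2*PI) = rf (S j) c).
  { apply Huniq. rewrite S_INR; split; nra. apply abs_le_intro; unfold w in *; lra. rewrite <- EH; auto. }
  split; auto. unfold rho. rewrite ER, e. reflexivity. }
assert (hv0 : c <= c + 2 * INR 0 * PI <= c + 2 * INR k * PI) by (simpl; split; nra).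
assert (Hend : rho k = rho 0%nat).
{ destruct (Hrf 0%nat c (Hval 0%nat c hv0)) as [hb0 [hz0 _]].
  assert (Eu : c + 2 * INR k * PI + (rf 0%nat c + (T - 2 * INR k * PI)) = (c + 2 * INR 0 * PI + rf 0%nat c) + T)
    by (simpl; ring).
  assert (hu : alpha < c + 2 * INR 0 * PI + rf 0%nat c < beta /\ alpha < c + 2 * INR 0 * PI + rf 0%nat c + T < beta)
    by (simpl; unfold c, w in *; split; split; lra).
  destruct (hper _ (proj1 hu) (proj2 hu)) as [px py].
  assert (EH : Hr X Y k c (rf 0%nat c + (T - 2 * INR k * PI)) = Hr X Y 0 c (rf 0%nat c))
    by (unfold Hr; rewrite Eu, px, py; reflexivity).
  assert (e : rf 0%nat c + (T - 2 * INR k * PI) = rf k c).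
  { apply Huniq. split; nra. apply abs_le_intro; unfold w in *; lra. rewrite EH; auto. }
  unfold rho. rewrite <- e. unfold Rad0. rewrite Eu, px, py. reflexivity. }
assert (Hdist : forall i j, (i < j)%nat -> (j <= k - 1)%nat -> rho i <> rho j).
{ intros i j hij hjk E.
  assert (hij' : INR i + 1 <= INR j) by (rewrite <- S_INR; apply le_INR; lia).
  assert (hjk' : INR j + 1 <= INR k) by (rewrite <- S_INR; apply le_INR; lia).
  assert (hi0 : 0 <= INR i) by apply pos_INR.
  assert (vi : c <= c + 2 * INR i * PI <= c + 2 * INR k * PI) by (split; nra).
  assert (vj : c <= c + 2 * INR j * PI <= c + 2 * INR k * PI) by (split; nra).
  destruct (Hrf i c (Hval i c vi)) as [hbi [hzi _]].
  destruct (Hrf j c (Hval j c vj)) as [hbj [hzj _]].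
  destruct (on_ray X Y i c _ hzi) as [xi yi]. destruct (on_ray X Y j c _ hzj) as [xj yj].
  unfold rho in E.
  apply (collide X Y alpha beta T d mu (c + 2 * INR i * PI + rf i c) (c + 2 * INR j * PI + rf j c) CH);
    try (unfold c, w in *; nra).
  all: try (rewrite xi, xj, E; reflexivity). all: try (rewrite yi, yj, E; reflexivity). }
destruct (comb rho k hk Hdist Hend) as [m [hm Hm]].
destruct m as [|m']; [lia|].
replace (S m' - 1)%nat with m' in Hm by lia. replace (S m' + 1)%nat with (S (S m')) in Hm by lia.
destruct (Hshift m' ltac:(lia)) as [_ S1]. destruct (Hshift (S m') ltac:(lia)) as [_ S2].
assert (hm1 : INR (S m') + 1 <= INR k) by (rewrite <- S_INR; apply le_INR; lia).
assert (hm0 : INR (S m') = INR m' + 1) by apply S_INR.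
assert (hm00 : 0 <= INR m') by apply pos_INR.
assert (Vm : forall j psi, (j <= S m')%nat -> c <= psi <= c + 2 * PI -> c <= psi + 2 * INR j * PI <= c + 2 * INR k * PI).
{ intros j psi hj hp. assert (INR j <= INR (S m')) by (apply le_INR; auto).
  pose proof (pos_INR j). split; nra. }
set (D := fun psi => Rad0 X Y m' psi (rf m' psi) - Rad0 X Y (S m') psi (rf (S m') psi)).
assert (Dc : D c = rho m' - rho (S m')) by reflexivity.
assert (D2 : D (c + 2*PI) = rho (S m') - rho (S (S m'))) by (unfold D; rewrite S1, S2; reflexivity).
assert (Dcont : forall psi, c <= psi <= c + 2*PI -> continuity_pt D psi).
{ intros psi hp. apply (proj2 (continuity_pt_filterlim _ _)).
  assert (CR : forall j, (j <= S m')%nat -> continuous (fun q => Rad0 X Y j q (rf j q)) psi).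
  { intros j hj. pose proof (Vm j psi hj hp) as vv. destruct (Hrf j psi (Hval j psi vv)) as [hb [_ hc]].
    unfold Rad0.
    assert (Ht : continuous (fun q => q + 2 * INR j * PI + rf j q) psi).
    { apply (cont_plus (fun q => q + 2 * INR j * PI) (rf j)); auto.
      apply (ex_derive_continuous (fun q => q + 2 * INR j * PI)). auto_derive. auto. }
    destruct (hder (psi + 2 * INR j * PI + rf j psi) ltac:(unfold c, w in *; nra)) as [eX [eY _]].
    apply (cont_plus (fun q => X (q + 2 * INR j * PI + rf j q) * cos q) (fun q => Y (q + 2 * INR j * PI + rf j q) * sin q)).
    - apply cont_mult; [|apply cont_cos]. apply (continuous_comp (fun q => q + 2 * INR j * PI + rf j q) X); auto.
      apply (ex_derive_continuous X); auto.
    - apply cont_mult; [|apply cont_sin]. apply (continuous_comp (fun q => q + 2 * INR j * PI + rf j q) Y); auto.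
      apply (ex_derive_continuous Y); auto. }
  unfold D. apply (cont_plus (fun q => Rad0 X Y m' q (rf m' q)) (fun q => - Rad0 X Y (S m') q (rf (S m') q))).
  apply CR; lia. apply cont_opp. apply CR; lia. }
assert (Hz : exists psi, c <= psi <= c + 2*PI /\ D psi = 0).
{ destruct (Rlt_dec (D c) 0) as [neg|nneg].
  - assert (0 < D (c + 2*PI)) by (rewrite Dc in neg; rewrite D2; nra).
    destruct (IVT_interv D c (c + 2*PI) Dcont ltac:(lra) neg H) as [z [hz1 hz2]]. exists z; auto.
  - assert (0 < D c).
    { apply Rnot_lt_le in nneg. rewrite Dc in *.
      destruct (Req_dec (rho m' - rho (S m')) 0) as [e|e]; [rewrite e in Hm; lra|lra]. }
    assert (D (c + 2*PI) < 0) by (rewrite Dc in H; rewrite D2; nra).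
    destruct (IVT_interv (fun q => - D q) c (c + 2*PI)) as [z [hz1 hz2]].
    + intros a ha'. apply continuity_pt_opp. apply Dcont; auto.
    + lra.
    + lra.
    + lra.
    + exists z. split; auto. lra. }
destruct Hz as [psi [hp hDz]].
pose proof (Vm m' psi ltac:(lia) hp) as v1. pose proof (Vm (S m') psi ltac:(lia) hp) as v2.
destruct (Hrf m' psi (Hval _ _ v1)) as [hb1 [hz1 _]].
destruct (Hrf (S m') psi (Hval _ _ v2)) as [hb2 [hz2 _]].
destruct (on_ray X Y m' psi _ hz1) as [x1 y1]. destruct (on_ray X Y (S m') psi _ hz2) as [x2 y2].
assert (ER : Rad0 X Y m' psi (rf m' psi) = Rad0 X Y (S m') psi (rf (S m') psi)) by (unfold D in hDz; lra).
apply (collide X Y alpha beta T d mu (psi + 2 * INR m' * PI + rf m' psi) (psi + 2 * INR (S m') * PI + rf (S m') psi) CH);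
  try (unfold c, w in *; nra).
all: try (rewrite x1, x2, ER; reflexivity). all: try (rewrite y1, y2, ER; reflexivity).
Qed.

Lemma Y_sincr X Y alpha beta T d mu (j : nat) : CurveHyp X Y alpha beta T d mu ->
  -d + 3*(d/32) < 2 * INR j * PI -> 2 * INR j * PI < beta - d/4 - 3*(d/32) ->
  sincr (fun v => Y (2 * INR j * PI + v)) (-2*(d/32)) (2*(d/32)).
Proof. intros CH h1 h2 v1 v2 a b c.
pose proof (Hr_sincr X Y alpha beta T d mu j 0 CH ltac:(lra) ltac:(lra) v1 v2 a b c) as K.
unfold Hr in K. rewrite cos_0, sin_0 in K. rewrite !Rplus_0_l in K. lra. Qed.

Lemma period_near X Y alpha beta T d mu : CurveHyp X Y alpha beta T d mu -> 2 * PI + 2 * d <= beta ->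
  Rabs (T - 2 * PI) <= d/32/2.
Proof.
intros CH hb. pose proof CH as [hd [ha [hT [hmu [hder [happ [hper hinj]]]]]]].
set (w := d/32) in *. pose proof PI_gt3 as hpi. pose proof PI_4 as hpi4.
destruct (hper 0 ltac:(lra) ltac:(lra)) as [pX pY]. rewrite Rplus_0_l in pX, pY.
destruct (happ T ltac:(lra)) as [aXT aYT]. destruct (happ 0 ltac:(lra)) as [aX0 aY0].
rewrite cos_0 in aX0. rewrite sin_0 in aY0. rewrite pX in aXT. rewrite pY in aYT.
assert (hc : 1 - 2*mu <= cos T).
{ pose proof (abs_le_lo _ _ aXT). pose proof (abs_le_hi _ _ aX0). pose proof (abs_le_lo _ _ aX0). pose proof (abs_le_hi _ _ aXT). lra. }
assert (hs : Rabs (sin T) <= 2*mu).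
{ apply abs_le_intro.
  - pose proof (abs_le_hi _ _ aYT). pose proof (abs_le_lo _ _ aY0). lra.
  - pose proof (abs_le_lo _ _ aYT). pose proof (abs_le_hi _ _ aY0). lra. }
set (n := up (T / (2 * PI) - 1/2)).
destruct (archimed (T / (2 * PI) - 1/2)) as [u1 u2]. fold n in u1, u2.
assert (hn : (0 <= n)%Z).
{ apply le_IZR. assert (0 < T / (2*PI)) by (apply Rdiv_lt_0_compat; lra).
  assert (-1 < IZR n) by lra. apply lt_IZR in H0 as H1. simpl. apply IZR_le. lia. }
set (k := Z.to_nat n).
assert (Ek : INR k = IZR n) by (unfold k; rewrite INR_IZR_INZ, Z2Nat.id; auto).
set (x := T - 2 * INR k * PI).
assert (Ex : T = x + 2 * INR k * PI) by (unfold x; ring).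
assert (hx : - PI <= x <= PI).
{ rewrite Ek in *. unfold x.
  assert (T / (2*PI) * (2*PI) = T) by (field; lra).
  split; nra. }
assert (cx : cos x = cos T) by (rewrite Ex, cos_period; reflexivity).
assert (sx : sin x = sin T) by (rewrite Ex, sin_period; reflexivity).
assert (cpos : 0 < cos x) by (rewrite cx; unfold w in *; lra).
assert (hx2 : - (PI/2) <= x <= PI/2).
{ destruct (Rle_dec (-(PI/2)) x) as [l|l]; destruct (Rle_dec x (PI/2)) as [l'|l'].
  - lra.
  - apply Rnot_le_lt in l'. pose proof (cos_le_0 x ltac:(lra) ltac:(lra)). lra.
  - apply Rnot_le_lt in l. pose proof (cos_le_0 (-x) ltac:(lra) ltac:(lra)). rewrite cos_neg in H. lra.
  - lra. }
assert (s1 : 5/6 <= sin 1) by (pose proof (sin_lb3 1 ltac:(lra)) as Hs1; simpl in Hs1; lra).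
assert (hx1' : -1 <= x <= 1).
{ destruct (Rle_dec x 1) as [l'|l']; destruct (Rle_dec (-1) x) as [l|l].
  - lra.
  - apply Rnot_le_lt in l. pose proof (sin_incr_1 x (-1) ltac:(lra) ltac:(lra) ltac:(lra) ltac:(lra) ltac:(lra)).
    assert (E1 : sin (-1) = - sin 1) by (rewrite <- sin_neg; f_equal; lra). rewrite E1 in H. apply abs_le_lo in hs. rewrite <- sx in hs. unfold w in *. lra.
  - apply Rnot_le_lt in l'. pose proof (sin_incr_1 1 x ltac:(lra) ltac:(lra) ltac:(lra) ltac:(lra) ltac:(lra)).
    apply abs_le_hi in hs. rewrite <- sx in hs. unfold w in *. lra.
  - apply Rnot_le_lt in l. apply Rnot_le_lt in l'. lra. }
assert (hx1 : Rabs x <= 1) by (apply abs_le_intro; lra).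
assert (hxs : Rabs x <= w/2).
{ pose proof (abs_sin_half x ltac:(lra)). rewrite sx in H. unfold w in *. lra. }
destruct k as [|[|k']] eqn:Ek'.
- exfalso. simpl in Ex. rewrite Rmult_0_r, Rmult_0_l, Rplus_0_r in Ex.
  pose proof (Y_sincr X Y alpha beta T d mu 0 CH) as K. simpl in K.
  rewrite !Rmult_0_r, !Rmult_0_l in K.
  assert (Y (0 + 0) < Y (0 + T)).
  { apply K; unfold w in *; try lra. apply abs_le_hi in hxs. lra. }
  rewrite !Rplus_0_l in H. lra.
- simpl in Ex. rewrite Ex. replace (x + 2 * 1 * PI - 2 * PI) with x by ring. exact hxs.
- exfalso. apply (no_wind X Y alpha beta T d mu (S (S k')) CH). lia.
  fold w. replace (T - 2 * INR (S (S k')) * PI) with x by (unfold x; reflexivity). exact hxs.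
Qed.

Lemma im_le_Cmod (c : C) : Rabs (Im c) <= Cmod c.
Proof. unfold Cmod, Im. destruct c as [x y]; simpl. rewrite <- sqrt_Rsqr_abs.
apply sqrt_le_1_alt. unfold Rsqr. nra. Qed.

Lemma parts (z : C) t r E : Cmod (Cminus z (Cminus (cis t) (Cmult (RtoC r) (cis (3*t))))) <= E ->
  Rabs (Re z - (cos t - r * cos (3*t))) <= E /\ Rabs (Im z - (sin t - r * sin (3*t))) <= E.
Proof. intros H. split.
- eapply Rle_trans; [|exact H]. eapply Rle_trans; [|apply re_le_Cmod]. right.
  destruct z as [x y]. unfold Cminus, Cplus, Copp, Cmult, RtoC, cis, Re; simpl. f_equal. ring.
- eapply Rle_trans; [|exact H]. eapply Rle_trans; [|apply im_le_Cmod]. right.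
  destruct z as [x y]. unfold Cminus, Cplus, Copp, Cmult, RtoC, cis, Im; simpl. f_equal. ring.
Qed.

Lemma abs_le_intro' x e : - e < x -> x < e -> Rabs x < e.
Proof. unfold Rabs; destruct Rcase_abs; lra. Qed.
Lemma abs_le_lo' x e : Rabs x < e -> - e < x.
Proof. unfold Rabs; destruct Rcase_abs; lra. Qed.
Lemma abs_le_hi' x e : Rabs x < e -> x < e.
Proof. unfold Rabs; destruct Rcase_abs; lra. Qed.

Lemma C_eq (z1 z2 : C) : Re z1 = Re z2 -> Im z1 = Im z2 -> z1 = z2.
Proof. destruct z1, z2; unfold Re, Im; simpl; intros; subst; auto. Qed.

Theorem mainTheorem7 (eps alpha beta a : R) (zh : R -> R -> C) (T : R -> R) :
  0 < eps -> alpha < 0 -> 2 * PI < beta ->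
  C2k_on_complex 7 (fun p => 0 <= fst p <= eps /\ alpha < snd p < beta) zh ->
  (exists K : R, forall s t, 0 <= s <= eps -> alpha < t < beta ->
      Cmod (Cminus (zh s t)
                   (Cminus (cis t) (Cmult (RtoC (4/3 * a * s ^ 4)) (cis (3 * t)))))
        <= K * s ^ 5) ->
  (forall s, 0 <= s <= eps -> Im (zh s 0) = 0) ->
  T 0 = 2 * PI ->
  (forall s, 0 < s <= eps ->
     0 < T s /\ T s < beta /\
     (forall t, alpha < t < beta -> alpha < t + T s < beta ->
        zh s (t + T s) = zh s t) /\
     (forall t1 t2, 0 <= t1 < T s -> 0 <= t2 < T s -> zh s t1 = zh s t2 -> t1 = t2)) ->
  exists eps', 0 < eps' <= eps /\
    C1k_on_interval 7 0 eps' T /\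
    exists K : R, forall s, 0 <= s <= eps' -> Rabs (T s - 2 * PI) <= K * s ^ 5.
Proof.
intros heps hal hbe [U [HU [HSU [CX CY]]]] [K0 HK] HIm0 HT0 HTs.
set (X2 := fun s t => Re (zh s t)) in *. set (Y2 := fun s t => Im (zh s t)) in *.
pose proof PI_gt3 as hpi. pose proof PI_4 as hpi4.
assert (Hb : forall s t, 0 <= s <= eps -> alpha < t < beta ->
   Rabs (X2 s t - (cos t - 4/3*a*s^4 * cos (3*t))) <= K0 * s^5 /\
   Rabs (Y2 s t - (sin t - 4/3*a*s^4 * sin (3*t))) <= K0 * s^5).
{ intros s t hs ht. apply parts. apply HK; auto. }
assert (H0 : forall t, alpha < t < beta -> X2 0 t = cos t /\ Y2 0 t = sin t).
{ intros t ht. destruct (Hb 0 t ltac:(lra) ht) as [b1 b2].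
  replace (K0 * 0^5) with 0 in * by ring. replace (4/3*a*0^4) with 0 in * by ring.
  split.
  - pose proof (Rabs_pos (X2 0 t - (cos t - 0 * cos (3 * t)))).
    assert (E : Rabs (X2 0 t - (cos t - 0 * cos (3 * t))) = 0) by lra.
    apply Rabs_eq_0 in E. lra.
  - pose proof (Rabs_pos (Y2 0 t - (sin t - 0 * sin (3 * t)))).
    assert (E : Rabs (Y2 0 t - (sin t - 0 * sin (3 * t))) = 0) by lra.
    apply Rabs_eq_0 in E. lra. }
set (d := Rmin (Rmin (-alpha) (beta - 2*PI)) 1 / 2).
assert (hd : 0 < d <= 1/2 /\ alpha <= -2*d /\ 2*PI + 2*d <= beta).
{ unfold d. pose proof (Rmin_l (Rmin (-alpha) (beta - 2*PI)) 1). pose proof (Rmin_r (Rmin (-alpha) (beta - 2*PI)) 1).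
  pose proof (Rmin_l (-alpha) (beta - 2*PI)). pose proof (Rmin_r (-alpha) (beta - 2*PI)).
  assert (0 < Rmin (Rmin (-alpha) (beta - 2*PI)) 1) by (repeat apply Rmin_pos; lra).
  lra. }
destruct hd as [hd [had hbd]].
set (w := d/32).
destruct (C2k_partials _ _ _ CX) as [PX [CXx CXy]].
destruct (C2k_partials _ _ _ CY) as [PY [CYx CYy]].
assert (HS : forall s t, 0 <= s <= eps -> alpha < t < beta -> U (s, t)).
{ intros s t h1 h2. apply HSU. simpl. auto. }
assert (DY0 : forall t, alpha < t < beta -> py Y2 0 t = cos t).
{ intros t ht. unfold py. rewrite (Derive_ext_loc _ sin).
  - apply is_derive_unique. apply is_derive_sin.
  - apply (locally_interval _ t alpha beta); simpl; try lra. intros y h1 h2. apply H0; auto. }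
assert (DX0 : forall t, alpha < t < beta -> py X2 0 t = - sin t).
{ intros t ht. unfold py. rewrite (Derive_ext_loc _ cos).
  - apply is_derive_unique. apply is_derive_cos.
  - apply (locally_interval _ t alpha beta); simpl; try lra. intros y h1 h2. apply H0; auto. }
assert (UC : forall f, C2k 6 U f -> exists del : posreal, forall s t, 0 <= s <= del -> s <= eps ->
    -d <= t <= beta - d/4 -> Rabs (f s t - f 0 t) < 1/8).
{ intros f Cf.
  assert (h8 : 0 < 1/8) by lra.
  destruct (uniform_continuity_2d f 0 eps (-d) (beta - d/4)) with (eps := mkposreal _ h8) as [del Hdel].
  { intros x y hx hy. apply (cont2d f (x, y)). apply (C2k_cont 6 U); auto. apply HS; simpl; lra. }
  assert (hdel : 0 < del/2) by (destruct del; simpl; lra).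
  exists (mkposreal _ hdel). simpl. intros s t hs hse ht.
  apply Hdel; try lra. rewrite Rminus_0_r, Rabs_right; lra. rewrite Rminus_eq_0, Rabs_R0. destruct del; simpl; lra. }
destruct (UC _ CYy) as [dY HdY]. destruct (UC _ CXy) as [dX HdX].
set (A0 := Rabs (4/3*a) + Rabs K0 + 1).
assert (hA0 : 1 <= A0) by (unfold A0; pose proof (Rabs_pos (4/3*a)); pose proof (Rabs_pos K0); lra).
set (eps1 := Rmin (Rmin eps (Rmin dY dX)) (Rmin 1 (w/8/A0))).
assert (he1 : 0 < eps1 /\ eps1 <= eps /\ eps1 <= dY /\ eps1 <= dX /\ eps1 <= 1 /\ eps1 <= w/8/A0).
{ unfold eps1. pose proof (Rmin_l (Rmin eps (Rmin dY dX)) (Rmin 1 (w/8/A0))).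
  pose proof (Rmin_r (Rmin eps (Rmin dY dX)) (Rmin 1 (w/8/A0))).
  pose proof (Rmin_l eps (Rmin dY dX)). pose proof (Rmin_r eps (Rmin dY dX)).
  pose proof (Rmin_l dY dX). pose proof (Rmin_r dY dX). pose proof (Rmin_l 1 (w/8/A0)). pose proof (Rmin_r 1 (w/8/A0)).
  assert (0 < w/8/A0) by (unfold w; apply Rdiv_lt_0_compat; lra).
  assert (0 < eps1) by (unfold eps1; repeat apply Rmin_pos; try lra; destruct dY; destruct dX; simpl; lra).
  unfold eps1 in *. lra. }
assert (U2 : U (0, 2*PI)) by (apply HS; lra).
destruct (open_box U 0 (2*PI) HU U2) as [r0 Hr0].
assert (h2 : 0 < 1/2) by lra.
destruct (cont2d (py Y2) (0, 2*PI) (C2k_cont 6 U _ CYy _ U2) (mkposreal _ h2)) as [r1 Hr1].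
simpl in Hr1. rewrite DY0, cos_2PI in Hr1 by lra.
set (r2 := Rmin r0 r1).
assert (hr2 : 0 < r2 /\ r2 <= r0 /\ r2 <= r1) by (unfold r2; split; [apply Rmin_pos; [destruct r0|destruct r1]; simpl; lra|split; [apply Rmin_l|apply Rmin_r]]).
set (w' := Rmin w (r2/2)).
assert (hw' : 0 < w' /\ w' <= w /\ w' <= r2/2) by (unfold w', w; split; [apply Rmin_pos; lra|split; [apply Rmin_l|apply Rmin_r]]).
assert (sw' : w'/2 <= sin w') by (apply sin_half; unfold w in *; lra).
assert (h3 : 0 < sin w' / 2) by lra.
assert (Up : U (0, 2*PI + w')) by (apply HS; unfold w in *; lra).
assert (Um : U (0, 2*PI - w')) by (apply HS; unfold w in *; lra).
destruct (cont2d Y2 (0, 2*PI + w') (C2k_cont 7 U _ CY _ Up) (mkposreal _ h3)) as [r3 Hr3].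
destruct (cont2d Y2 (0, 2*PI - w') (C2k_cont 7 U _ CY _ Um) (mkposreal _ h3)) as [r4 Hr4].
simpl in Hr3, Hr4.
rewrite (proj2 (H0 (2*PI + w') ltac:(unfold w in *; lra))) in Hr3.
rewrite (proj2 (H0 (2*PI - w') ltac:(unfold w in *; lra))) in Hr4.
assert (E1 : sin (2*PI + w') = sin w') by (rewrite Rplus_comm; pose proof (sin_period w' 1) as Hp; simpl INR in Hp; rewrite Rmult_1_r in Hp; exact Hp).
assert (E2 : sin (2*PI - w') = - sin w') by (rewrite sin_minus, sin_2PI, cos_2PI; ring).
rewrite E1 in Hr3. rewrite E2 in Hr4.
set (rho := Rmin r2 (Rmin r3 r4)).
assert (hrho : 0 < rho /\ rho <= r2 /\ rho <= r3 /\ rho <= r4).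
{ unfold rho. pose proof (Rmin_l r2 (Rmin r3 r4)). pose proof (Rmin_r r2 (Rmin r3 r4)).
  pose proof (Rmin_l r3 r4). pose proof (Rmin_r r3 r4).
  split; [repeat apply Rmin_pos; try lra; destruct r3; destruct r4; simpl; lra|lra]. }
assert (Hbox : forall s t, -rho < s < rho -> Rabs (t - 2*PI) < r2 -> U (s, t) /\ 1/2 < py Y2 s t).
{ intros s t hs ht. assert (Rabs (s - 0) < r2) by (rewrite Rminus_0_r; apply abs_le_intro' ; lra).
  split. apply Hr0; lra. specialize (Hr1 s t ltac:(lra) ltac:(lra)). apply abs_le_lo' in Hr1. lra. }
assert (Hinc : forall p, -rho < p < rho -> sincr (Y2 p) (2*PI - w') (2*PI + w')).
{ intros p hp v1 v2 hv1 hv12 hv2.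
  apply (incr_function (Y2 p) (2*PI - r2) (2*PI + r2) (py Y2 p)); simpl; try lra.
  - intros x hx1 hx2. destruct (Hbox p x hp ltac:(apply abs_le_intro'; lra)) as [Ux _].
    apply Derive_correct. apply (PY (p, x) Ux).
  - intros x hx1 hx2. destruct (Hbox p x hp ltac:(apply abs_le_intro'; lra)) as [_ Dx]. lra. }
assert (Hsg : forall p, -rho < p < rho -> Y2 p (2*PI - w') < 0 /\ 0 < Y2 p (2*PI + w')).
{ intros p hp. assert (ap3 : Rabs (p - 0) < r3) by (rewrite Rminus_0_r; apply abs_le_intro'; lra).
  assert (ap4 : Rabs (p - 0) < r4) by (rewrite Rminus_0_r; apply abs_le_intro'; lra).
  assert (z3 : Rabs (2*PI + w' - (2*PI + w')) < r3) by (rewrite Rminus_eq_0, Rabs_R0; destruct r3; simpl; lra).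
  assert (z4 : Rabs (2*PI - w' - (2*PI - w')) < r4) by (rewrite Rminus_eq_0, Rabs_R0; destruct r4; simpl; lra).
  pose proof (Hr3 p _ ap3 z3) as k3. pose proof (Hr4 p _ ap4 z4) as k4.
  apply abs_le_hi' in k4. apply abs_le_lo' in k3. lra. }
assert (Hex : forall p t, -rho < p < rho -> Rabs (t - 2*PI) < r2 -> ex_derive (Y2 p) t).
{ intros p t hp ht. destruct (Hbox p t hp ht) as [Ux _]. apply (PY (p, t) Ux). }
destruct (root_fun Y2 (-rho) rho (2*PI - w') (2*PI + w')) as [g Hg].
{ lra. }
{ exact Hinc. }
{ exact Hsg. }
{ intros p v hp hv. apply (proj2 (continuity_pt_filterlim _ _)). apply (ex_derive_continuous (Y2 p)).
  apply Hex; auto. apply abs_le_intro'; lra. }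
{ intros p v hp hv. destruct (Hbox p v hp ltac:(apply abs_le_intro'; lra)) as [Ux _].
  apply (continuous_comp_2 (fun q => q) (fun _ => v) Y2 p).
  apply continuous_id. apply continuous_const. apply (C2k_cont 7 U _ CY (p, v) Ux). }
assert (Cg : C1k 7 (fun s => -rho < s < rho) g).
{ apply (ift_C7 Y2 U rho g HU CY).
  - intros s hs. destruct (Hg s hs) as [hb _]. apply (Hbox s (g s) hs). apply abs_le_intro'; lra.
  - intros s hs. apply (Hg s hs).
  - intros s hs. apply (Hg s hs).
  - intros s hs. destruct (Hg s hs) as [hb _]. destruct (Hbox s (g s) hs ltac:(apply abs_le_intro'; lra)). lra. }
set (eps' := Rmin eps1 (rho/2)).
assert (he' : 0 < eps' /\ eps' <= eps1 /\ eps' <= rho/2).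
{ unfold eps'. split; [apply Rmin_pos; lra|split; [apply Rmin_l|apply Rmin_r]]. }
assert (HCH : forall s, 0 < s <= eps' -> CurveHyp (X2 s) (Y2 s) alpha beta (T s) d (A0 * s^4)).
{ intros s hs. destruct (HTs s ltac:(lra)) as [hT1 [hT2 [hper hinj]]].
  assert (s43 : s^3 <= 1) by (replace 1 with (1^3) by ring; apply pow_incr; lra).
  assert (s4 : s^4 <= s) by (replace (s^4) with (s * s^3) by ring; assert (0 <= s) by lra; nra).
  assert (s54 : s^5 <= s^4) by (replace (s^5) with (s * s^4) by ring; assert (0 <= s^4) by (apply pow_le; lra); nra).
  assert (hs4 : A0 * s^4 <= w/8).
  { assert (s^4 <= w/8/A0) by lra. apply (Rmult_le_compat_l A0) in H; [|lra].
    replace (A0 * (w/8/A0)) with (w/8) in H by (field; lra). lra. }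
  assert (s40 : 0 <= s^4) by (apply pow_le; lra).
  split; [lra|]. split; [lra|]. split; [lra|]. split; [split; [nra|unfold w in *; lra]|].
  split; [|split; [|split]].
  - intros t ht. assert (htab : alpha < t < beta) by lra.
    pose proof (HS s t ltac:(lra) htab) as Ust.
    split; [apply (proj2 (PX (s,t) Ust))|]. split; [apply (proj2 (PY (s,t) Ust))|].
    pose proof (HdY s t ltac:(lra) ltac:(lra) ltac:(lra)) as k1. pose proof (HdX s t ltac:(lra) ltac:(lra) ltac:(lra)) as k2.
    rewrite DY0 in k1 by lra. rewrite DX0 in k2 by lra.
    assert (eY : Derive (Y2 s) t = py Y2 s t) by reflexivity.
    assert (eX : Derive (X2 s) t = py X2 s t) by reflexivity.
    rewrite eY, eX. pose proof (abs_le_lo' _ _ k1). pose proof (abs_le_hi' _ _ k1).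
    pose proof (abs_le_lo' _ _ k2). pose proof (abs_le_hi' _ _ k2).
    split; apply abs_le_intro; lra.
  - intros t ht. destruct (Hb s t ltac:(lra) ht) as [b1 b2].
    assert (Rabs (4/3*a*s^4 * cos (3*t)) <= Rabs (4/3*a) * s^4).
    { rewrite Rabs_mult, Rabs_mult. rewrite (Rabs_right (s^4)) by lra. pose proof (COS_bound (3*t)).
      assert (Rabs (cos (3*t)) <= 1) by (apply abs_le_intro; lra). pose proof (Rabs_pos (4/3*a)). assert (0 <= Rabs (4/3*a) * s^4) by (apply Rmult_le_pos; lra). nra. }
    assert (Rabs (4/3*a*s^4 * sin (3*t)) <= Rabs (4/3*a) * s^4).
    { rewrite Rabs_mult, Rabs_mult. rewrite (Rabs_right (s^4)) by lra. pose proof (SIN_bound (3*t)).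
      assert (Rabs (sin (3*t)) <= 1) by (apply abs_le_intro; lra). pose proof (Rabs_pos (4/3*a)). assert (0 <= Rabs (4/3*a) * s^4) by (apply Rmult_le_pos; lra). nra. }
    assert (K0 * s^5 <= Rabs K0 * s^4).
    { assert (K0 <= Rabs K0) by apply Rle_abs. pose proof (Rabs_pos K0). assert (0 <= s^5) by (apply pow_le; lra). nra. }
    unfold A0. split.
    + replace (X2 s t - cos t) with ((X2 s t - (cos t - 4/3*a*s^4 * cos (3*t))) + - (4/3*a*s^4 * cos (3*t))) by ring.
      eapply Rle_trans; [apply Rabs_triang|]. rewrite Rabs_Ropp. nra.
    + replace (Y2 s t - sin t) with ((Y2 s t - (sin t - 4/3*a*s^4 * sin (3*t))) + - (4/3*a*s^4 * sin (3*t))) by ring.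
      eapply Rle_trans; [apply Rabs_triang|]. rewrite Rabs_Ropp. nra.
  - intros t q1 q2. pose proof (hper t q1 q2) as E. unfold X2, Y2. rewrite E. auto.
  - intros u1 u2 q1 q2 e1 e2. apply hinj; auto. apply C_eq; auto. }
assert (HYT : forall s, 0 < s <= eps' -> Y2 s (T s) = 0).
{ intros s hs. destruct (HTs s ltac:(lra)) as [hT1 [hT2 [hper _]]].
  pose proof (hper 0 ltac:(lra) ltac:(lra)) as E. rewrite Rplus_0_l in E.
  unfold Y2. rewrite E. apply HIm0. lra. }
assert (Hnear : forall s, 0 < s <= eps' -> Rabs (T s - 2*PI) <= w/2).
{ intros s hs. apply (period_near (X2 s) (Y2 s) alpha beta (T s) d (A0 * s^4)); auto. }
assert (Heq : forall s, 0 <= s <= eps' -> g s = T s).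
{ intros s hs. destruct (Rle_lt_or_eq_dec 0 s (proj1 hs)) as [hs0|hs0].
  - pose proof (HCH s ltac:(lra)) as CH. pose proof (Hnear s ltac:(lra)) as hn.
    destruct (Hg s ltac:(lra)) as [hgb [hgz _]].
    pose proof (Y_sincr (X2 s) (Y2 s) alpha beta (T s) d (A0 * s^4) 1 CH) as K.
    simpl INR in K. rewrite Rmult_1_r in K.
    assert (E : g s - 2*PI = T s - 2*PI).
    { apply (root_unique _ (-2*(d/32)) (2*(d/32)) _ _ (K ltac:(lra) ltac:(lra))).
      - unfold w in *; lra.
      - pose proof (abs_le_lo _ _ hn). pose proof (abs_le_hi _ _ hn). unfold w in *; lra.
      - replace (2 * PI + (g s - 2 * PI)) with (g s) by ring.
        replace (2 * PI + (T s - 2 * PI)) with (T s) by ring.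
        rewrite hgz, HYT; auto; lra. }
    lra.
  - subst s. rewrite HT0. destruct (Hg 0 ltac:(lra)) as [hgb [hgz _]].
    apply (root_unique (Y2 0) (2*PI - w') (2*PI + w')); try lra.
    + apply Hinc; lra.
    + rewrite hgz. rewrite (proj2 (H0 (2*PI) ltac:(lra))). rewrite sin_2PI. reflexivity. }
exists eps'. split; [lra|]. split.
- exists (fun s => -rho < s < rho), g. split; [apply open_interval|]. split; [intros; lra|]. split; auto.
- exists (4 * Rabs K0). intros s hs. destruct (Rle_lt_or_eq_dec 0 s (proj1 hs)) as [hs0|hs0].
  + pose proof (Hnear s ltac:(lra)) as hn. pose proof (HYT s ltac:(lra)) as hy.
    destruct (Hb s (T s) ltac:(lra) ltac:(destruct (HTs s ltac:(lra)); lra)) as [_ b2].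
    rewrite hy in b2.
    set (del := T s - 2*PI) in *.
    assert (ET : T s = del + 2 * INR 1 * PI) by (unfold del; simpl; ring).
    assert (ET3 : 3 * T s = 3 * del + 2 * INR 3 * PI) by (rewrite ET; simpl; ring).
    rewrite ET3, sin_period in b2. rewrite ET, sin_period in b2.
    assert (hdel : Rabs del <= 1.7) by (unfold w in *; lra).
    pose proof (abs_sin_half del hdel) as k1.
    pose proof (abs_sin_le (3 * del)) as k2. rewrite Rabs_mult, (Rabs_right 3) in k2 by lra.
    pose proof (HCH s ltac:(lra)) as [_ [_ [_ [[_ hmu] _]]]].
    assert (s40 : 0 <= s^4) by (apply pow_le; lra).
    assert (hr : Rabs (4/3*a*s^4) <= 1/12).
    { rewrite Rabs_mult, (Rabs_right (s^4)) by lra.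
      assert (Rabs (4/3*a) * s^4 <= A0 * s^4) by (apply Rmult_le_compat_r; [lra|unfold A0; pose proof (Rabs_pos K0); lra]).
      unfold w in *. lra. }
    assert (Rabs (sin del) <= K0 * s^5 + Rabs (4/3*a*s^4) * Rabs (sin (3*del))).
    { replace (sin del) with (- (0 - (sin del - 4/3*a*s^4 * sin (3*del))) + 4/3*a*s^4 * sin (3*del)) by ring.
      eapply Rle_trans; [apply Rabs_triang|]. rewrite Rabs_Ropp, Rabs_mult. lra. }
    assert (Rabs (4/3*a*s^4) * Rabs (sin (3*del)) <= 1/12 * (3 * Rabs del)).
    { apply Rmult_le_compat; try apply Rabs_pos; lra. }
    assert (K0 * s^5 <= Rabs K0 * s^5).
    { apply Rmult_le_compat_r; [apply pow_le; lra|apply Rle_abs]. }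
    lra.
  + subst s. rewrite HT0. replace (2*PI - 2*PI) with 0 by ring. rewrite Rabs_R0.
    simpl. lra.
Qed.
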